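(* Let $\Sigma:\ \dot x=-(A-M)x+d$ be $\gamma$-robust for some $\gamma>0$ and let $u=(A-M)^{-1}\mathbb{1}$. Let $i\neq k$ with $(M)_{ik}=0$ and $m_{ik}>0$, and suppose $-(A-M-m_{ik}e_ie_k^{\mathrm T})$ is Hurwitz. Then $\bar u=(A-M-m_{ik}e_ie_k^{\mathrm T})^{-1}\mathbb{1}$ satisfies $$\bar u_i\ \ge\ u_i+\frac{m_{ik}}{a_i}u_k.$$
   Context: $A=\mathrm{diag}(a_1,\dots,a_N)$ with all $a_i>0$, $M\in\mathbb{R}^{N\times N}$ has zero diagonal and nonnegative off-diagonal entries; $e_i$ is the $i$th standard basis vector and $\mathbb{1}$ the all-ones vector. For $\gamma>0$, a system $\dot x=-(A-M)x+d$ is $\gamma$-robust if $-(A-M)$ is Hurwitz and for every bounded disturbance $d$, the solution with $x(0)=0$ satisfies $\max_{p}|x_p(t)|\le\gamma\max_p\sup_{s\ge0}|d_p(s)|$ for all $t\ge0$. *)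

(* Defs.v *)
From HB Require Import structures.
From mathcomp Require Import all_boot all_order all_algebra.
From mathcomp Require Import all_classical all_reals all_analysis.
From mathcomp Require complex.
Import complex.ComplexField.
Set Implicit Arguments. Unset Strict Implicit. Unset Printing Implicit Defensive.
Import Order.TTheory GRing.Theory Num.Theory numFieldNormedType.Exports.
Local Open Scope classical_set_scope.
Local Open Scope ring_scope.

Definition hurwitz (R : realType) (N : nat) (B : 'M[R]_N) : Prop :=
  forall z : complex.complex R,
    root (char_poly (map_mx (fun x : R => complex.Complex x 0) B)) z ->
    complex.Re z < 0.

Definition is_solution (R : realType) (N : nat) (B : 'M[R]_N)
    (d x : 'I_N -> R -> R) : Prop :=
  (forall p, x p 0 = 0) /\
  (forall p, x p r @[r --> (0:R)^'+] --> x p 0) /\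
  (forall p (t : R), 0 < t ->
     is_derive t 1 (x p) (\sum_q B p q * x q t + d p t)).

(* gamma-robustness of  x' = -(A - M) x + d , with K := A - M. *)
Definition robust (R : realType) (N : nat) (gamma : R) (K : 'M[R]_N) : Prop :=
  hurwitz (- K) /\
  forall (d x : 'I_N -> R -> R) (D : R),
    (forall p (s : R), 0 <= s -> `|d p s| <= D) ->
    is_solution (- K) d x ->
    forall p (t : R), 0 <= t -> `|x p t| <= gamma * D.

(* Main.v *)
Require Import Defs.
From HB Require Import structures.
From mathcomp Require Import all_boot all_order all_algebra.
From mathcomp Require Import all_classical all_reals all_analysis.
From mathcomp Require Import polyrcf.
From mathcomp Require Import lra.
From mathcomp Require complex.
Import complex.ComplexField.
Import Order.TTheory GRing.Theory Num.Theory.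
Local Open Scope ring_scope.

Lemma minprinc (R : realFieldType) (N : nat) (A : 'M[R]_N) (y x : 'I_N -> R) :
  (forall p q, p != q -> A p q <= 0) -> (forall j, 0 < y j) ->
  (forall j, 0 < \sum_l A j l * y l) -> (forall j, 0 <= \sum_l A j l * x l) ->
  forall j, 0 <= x j.
Proof.
move=> HZ Hy HAy HAx j0.
case: (@Order.TotalTheory.arg_minP _ _ _ j0 xpredT (fun j => x j / y j) isT) => j _ Hmin.
have Hj : x j0 / y j0 >= x j / y j by apply: Hmin.
rewrite leNgt; apply/negP => Hneg.
set mu := x j / y j.
have mu0 : mu < 0.
  apply: le_lt_trans Hj _; by rewrite pmulr_llt0 ?invr_gt0.
have : \sum_l A j l * x l <= \sum_l A j l * (mu * y l).
  apply: ler_sum => l _.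
  have [->|ne] := eqVneq l j.
    by rewrite /mu divfK // gt_eqF.
  apply: ler_wnM2l; first by apply: HZ; rewrite eq_sym.
  have := Hmin l isT; rewrite -/mu => h.
  by rewrite -ler_pdivlMr ?Hy.
have -> : \sum_l A j l * (mu * y l) = mu * \sum_l A j l * y l.
  by rewrite mulr_sumr; apply: eq_bigr => l _; rewrite mulrCA.
move=> H; have := le_trans (HAx j) H.
rewrite pmulr_lge0 ?HAy // => /(lt_le_trans mu0); by rewrite ltxx.
Qed.

Lemma rowpos (R : realFieldType) (N : nat) (A : 'M[R]_N) (x : 'I_N -> R) (c : R) :
  (forall p q, p != q -> A p q <= 0) -> (forall j, 0 <= x j) ->
  (forall j, \sum_l A j l * x l = c) -> 0 < c -> forall j, 0 < x j.
Proof.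
move=> HZ Hx HA c0 j; rewrite lt_neqAle Hx andbT; apply/negP=> /eqP xj0.
have : \sum_l A j l * x l <= 0.
  apply: sumr_le0 => l _; have [->|ne] := eqVneq l j; first by rewrite -xj0 mulr0.
  by apply: mulr_le0_ge0; [apply: HZ; rewrite eq_sym|].
by rewrite HA leNgt c0.
Qed.

Lemma Mmat (R : realType) (N : nat) (K : 'M[R]_N) :
  (forall p q, p != q -> K p q <= 0) ->
  (forall t : R, 0 <= t -> (char_poly (-K)).[t] != 0) ->
  K \in unitmx /\ (forall p q, 0 <= invmx K p q).
Proof.
move=> HZ Hnz.
pose Kp := char_poly_mx (-K).
pose Q := char_poly (-K).
pose W := \adj Kp.
pose P l := \sum_m W l m.
pose A t := map_mx (horner_eval t) Kp.
have HA : forall t p q, A t p q = t *+ (p == q) + K p q.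
  move=> t p q; rewrite /A /Kp /char_poly_mx !mxE.
  by rewrite horner_evalE !hornerE opprK hornerMn hornerX.
have HAZ : forall t p q, p != q -> A t p q <= 0.
  by move=> t p q /negPf pq; rewrite HA pq mulr0n add0r HZ // pq.
have HAW : forall t j, \sum_l A t j l * (P l).[t] = Q.[t].
  move=> t j.
  have := congr1 (map_mx (horner_eval t)) (mul_mx_adj Kp).
  rewrite map_mxM map_scalar_mx -/W => E.
  have := congr1 (fun M => (M *m (const_mx 1 : 'cV[R]_N)) j 0) E.
  rewrite /= -mulmxA mul_scalar_mx !mxE mulr1 horner_evalE => <-.
  apply: eq_bigr => l _; rewrite !mxE horner_sum; congr (_ * _).
  by apply: eq_bigr => m _; rewrite !mxE mulr1.
have HQpos : forall t, 0 <= t -> 0 < Q.[t].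
  move=> t t0.
  have lc : lead_coef Q = 1 by apply/eqP; exact: char_poly_monic.
  have lc0 : 0 < lead_coef Q by rewrite lc ltr01.
  have [n Hn] := @poly_pinfty_gt_lc R Q lc0.
  have HT : 0 < Q.[Num.max n t] by apply: lt_le_trans (Hn _ _); rewrite ?lc ?ltr01 ?le_max ?lexx.
  rewrite ltNge; apply/negP => Hle.
  have tm : t <= Num.max n t by rewrite le_max lexx orbT.
  have [x /andP[x1 x2] rx] := @polyrcf.poly_ivt R Q t (Num.max n t) tm
     (mulr_le0_ge0 Hle (ltW HT)).
  by move: (Hnz x (le_trans t0 x1)); rewrite -/Q (rootP rx) eqxx.
pose T : R := 1 + \sum_p \sum_q `|K p q|.
have T0 : 0 < T.
  have : 0 <= \sum_p \sum_q `|K p q| by apply: sumr_ge0 => p _; apply: sumr_ge0.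
  rewrite /T; lra.
have HlyT : forall j, 0 < \sum_l A T j l * 1.
  move=> j.
  rewrite (eq_bigr (fun l => T *+ (j == l) + K j l)); last by move=> l _; rewrite mulr1 HA.
  rewrite big_split /= (bigD1 j) //= eqxx mulr1n big1 ?addr0; last first.
    by move=> l /negPf; rewrite eq_sym => ->.
  have h1 : \sum_l - `|K j l| <= \sum_l K j l.
    by apply: ler_sum => l _; have := ler_norm (- K j l); rewrite normrN; lra.
  have h2 : \sum_l `|K j l| <= \sum_p \sum_q `|K p q|.
    rewrite [X in _ <= X](bigD1 j) //= lerDl.
    by apply: sumr_ge0 => p _; apply: sumr_ge0.
  rewrite sumrN in h1; rewrite /T; lra.
have HwT : forall l, 0 < (P l).[T].
  have Hnn : forall l, 0 <= (P l).[T].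
    move=> l; apply: (@minprinc _ _ (A T) (fun _ => 1) (fun l => (P l).[T]) (HAZ T)) => //; 
    by move=> j0 /=; rewrite HAW ltW // HQpos // ltW.
  move=> l; apply: (@rowpos _ _ (A T) (fun l => (P l).[T]) Q.[T] (HAZ T)) => //.
  by rewrite HQpos // ltW.
have Hw0 : forall j0, 0 < (P j0).[0].
  move=> j0; rewrite ltNge; apply/negP => H0.
  pose Pi := \prod_l P l.
  have PiT : 0 < Pi.[T] by rewrite /Pi horner_prod; apply: prodr_gt0 => l _.
  have Pi0 : Pi != 0 by apply: contraTneq PiT => ->; rewrite horner0 ltxx.
  have Hex : exists l, (P l).[prev_root Pi 0 T] <= 0.
    case: prev_rootP => [Pie|y _ Piy _ _|c _ -> _].
    - by move: Pi0; rewrite Pie eqxx.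
    - move: Piy; rewrite /Pi horner_prod => /eqP /prodf_eq0 [l _ /eqP Hl].
      by exists l; rewrite Hl.
    - by exists j0; rewrite (min_idPl (ltW T0)).
  have rin := prev_root_in Pi 0 T.
  rewrite (min_idPl (ltW T0)) in rin.
  have rT := prev_root_lt T0 Pi0.
  have nor := prev_noroot (p := Pi) (a := 0) (b := T).
  set r := prev_root Pi 0 T in Hex rin rT nor.
  have r0 : 0 <= r by move: rin; rewrite in_itv /= => /andP[].
  have Hnn : forall l, 0 <= (P l).[r].
    move=> l; rewrite leNgt; apply/negP => Hl.
    have [x xin rx] := @polyrcf.poly_ivt R (P l) r T (ltW rT)
      (mulr_le0_ge0 (ltW Hl) (ltW (HwT l))).
    move: xin; rewrite in_itv /= => /andP[x1 x2].
    have xr : r < x.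
      rewrite lt_neqAle x1 andbT; apply: contraTneq rx => <-.
      by rewrite /root lt_eqF.
    have xT : x < T.
      rewrite lt_neqAle x2 andbT; apply: contraTneq rx => ->.
      by rewrite /root gt_eqF.
    have : x \in `]r, T[ by rewrite in_itv /= xr xT.
    move=> /nor; rewrite /root /Pi horner_prod (bigD1 l) //= (rootP rx) mul0r eqxx.
    done.
  have Hpos := @rowpos _ _ (A r) (fun l => (P l).[r]) Q.[r] (HAZ r) Hnn (HAW r) (HQpos r r0).
  case: Hex => l Hl.
  by have := Hpos l; rewrite ltNge Hl.
have A0 : A 0 = K by apply/matrixP => p q; rewrite HA mul0rn add0r.
have detK : \det K = Q.[0].
  by rewrite -A0 /A det_map_mx.
have Ku : K \in unitmx by rewrite unitmxE unitfE detK gt_eqF // HQpos.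
split => // p q.
apply: (@minprinc _ _ K (fun l => (P l).[0]) (fun l => invmx K l q) HZ) => //.
- by move=> j; rewrite -[in X in \sum_l X l]A0 HAW HQpos.
- move=> j.
  have := congr1 (fun M : 'M[R]_N => M j q) (mulmxV Ku).
  rewrite !mxE /= => ->; exact: ler0n.
Qed.

Lemma hurwitz_nz (R : realType) (N : nat) (K : 'M[R]_N) :
  hurwitz (- K) -> forall t : R, 0 <= t -> (char_poly (-K)).[t] != 0.
Proof.
move=> H t t0; apply/negP => /eqP Qt.
have := H (complex.Complex t 0).
have e : char_poly (map_mx (fun x : R => complex.Complex x 0) (- K))
   = map_poly (@complex.real_complex_def R (Phant R)) (char_poly (- K)).
  by rewrite (map_char_poly (@complex.real_complex_def R (Phant R))).
rewrite e.
have -> : complex.Complex t 0 = @complex.real_complex_def R (Phant R) t by [].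
rewrite /root horner_map Qt rmorph0 eqxx => /(_ isT) /=.
by rewrite ltNge t0.
Qed.

Theorem mainTheorem10 (R : realType) (N : nat) (a : 'I_N -> R) (M : 'M[R]_N)
  (gamma : R) (i k : 'I_N) (m : R) :
  (forall p, 0 < a p) ->
  (forall p, M p p = 0) ->
  (forall p q, p != q -> 0 <= M p q) ->
  0 < gamma ->
  robust gamma (diag_mx (\row_p a p) - M) ->
  i != k -> M i k = 0 -> 0 < m ->
  hurwitz (- (diag_mx (\row_p a p) - M - m *: delta_mx i k)) ->
  let u := invmx (diag_mx (\row_p a p) - M) *m (const_mx 1 : 'cV[R]_N) in
  let ubar := invmx (diag_mx (\row_p a p) - M - m *: delta_mx i k) *m (const_mx 1 : 'cV[R]_N) in
  ubar i 0 >= u i 0 + m / a i * u k 0.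
Proof.
move=> Ha HM0 HMpos _ Hrob ik Mik m0 Hb /=.
have HK := proj1 Hrob.
set K := diag_mx (\row_p a p) - M in HK Hb *.
set Kb := K - m *: delta_mx i k in Hb *.
set u := invmx K *m const_mx 1.
set ubar := invmx Kb *m const_mx 1.
have HZK : forall p q, p != q -> K p q <= 0.
  move=> p q /negPf pq; rewrite /K !mxE pq mulr0n sub0r oppr_le0 HMpos //.
  by rewrite pq.
have HZKb : forall p q, p != q -> Kb p q <= 0.
  move=> p q pq; rewrite /Kb !mxE.
  have := HZK p q pq; have : 0 <= m * ((p == i) && (q == k))%:R by rewrite mulr_ge0 // ltW.
  rewrite /K !mxE; lra.
have [Ku XK] := @Mmat _ _ K HZK (@hurwitz_nz _ _ K HK).
have [Kbu XKb] := @Mmat _ _ Kb HZKb (@hurwitz_nz _ _ Kb Hb).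
pose Xb := invmx Kb.
have Ku1 : K *m u = const_mx 1 by rewrite /u mulmxA mulmxV // mul1mx.
have Kbu1 : Kb *m u = const_mx 1 - m *: (delta_mx i k *m u).
  by rewrite /Kb mulmxBl Ku1 -scalemxAl.
have E : ubar = u + m *: (Xb *m (delta_mx i k *m u)).
  rewrite /ubar -{1}(mulKmx Kbu u) Kbu1 mulmxBr -/Xb -scalemxAr subrK.
  done.
have Ed : forall l, (delta_mx i k *m u) l 0 = (l == i)%:R * u k 0.
  move=> l; rewrite mxE (bigD1 k) //= big1 ?addr0.
    by rewrite mxE eqxx andbT.
  by move=> j /negPf jk; rewrite mxE jk andbF mul0r.
have Eb : (Xb *m (delta_mx i k *m u)) i 0 = Xb i i * u k 0.
  rewrite mxE (bigD1 i) //= big1 ?addr0.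
    by rewrite Ed eqxx mul1r.
  by move=> l /negPf li; rewrite Ed li mul0r mulr0.
have uk0 : 0 <= u k 0.
  rewrite /u mxE; apply: sumr_ge0 => l _; rewrite mxE mulr1; exact: XK.
have Kbii : Kb i i = a i.
  by rewrite /Kb /K !mxE eqxx mulr1n HM0 (negPf ik) andbF mulr0 !subr0.
have Hii : 1 <= a i * Xb i i.
  have := congr1 (fun Z : 'M[R]_N => Z i i) (mulmxV Kbu).
  rewrite !mxE eqxx mulr1n (bigD1 i) //= Kbii -/Xb => <-.
  rewrite gerDl; apply: sumr_le0 => l li.
  apply: mulr_le0_ge0; first by apply: HZKb; rewrite eq_sym.
  exact: XKb.
have Hinv : (a i)^-1 <= Xb i i.
  by rewrite -(ler_pM2l (Ha i)) mulrV // unitfE gt_eqF.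
clearbody u ubar Xb.
rewrite E mxE mxE Eb lerD2l -mulrA.
apply: ler_wpM2l; first exact: ltW.
exact: ler_wpM2r.
Qed.
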